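(* Let $P$ be a finite poset. Then $A(S_N(P))=\emptyset$.
   Context: For a poset $P$, $x\prec y$ means $x<y$ with no $z$ satisfying $x<z<y$; $\mathrm{Diag}(P)$ is the set of covering pairs $(x,y)$, and $\mathrm{Inc}(P)$ the set of pairs of incomparable elements. Four elements $a,b,c,d$ form an $N$ in $P$ if $b\prec c$, $a\prec c$, $b\prec d$ and $(a,d)\in\mathrm{Inc}(P)$; $(b,c)$ is the diagonal edge of this $N$. $N_{diag}(P)$ is the set of diagonal edges of all $N$'s in $P$. $S_N(P)$ is the poset obtained from $P$ by adding one new (dummy) vertex $u$ on each edge $(b,c)\in N_{diag}(P)$ (so that $b\prec u\prec c$), with the induced order. For a poset $Q$, $A(Q)$ is the set of pairs $(b,c)\in\mathrm{Diag}(Q)\setminus N_{diag}(Q)$ for which there exist $a,d\in Q$ with $a<c$, $b<d$, $(a,b),(c,d)\in\mathrm{Inc}(Q)$, and either $(a,c)\in N_{diag}(Q)$ or $(b,d)\in N_{diag}(Q)$. *)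

(* Defs.v *)
From mathcomp Require Import all_boot.
Set Implicit Arguments. Unset Strict Implicit. Unset Printing Implicit Defensive.

Definition is_porder (T : finType) (le : rel T) : Prop :=
  [/\ reflexive le, antisymmetric le & transitive le].

Section PosetNotions.
Variables (T : finType) (le : rel T).

Definition plt (x y : T) : bool := (x != y) && le x y.

Definition covers (x y : T) : bool :=
  plt x y && [forall z, ~~ (plt x z && plt z y)].

Definition incomp (x y : T) : bool := ~~ le x y && ~~ le y x.

Definition isN (a b c d : T) : bool :=
  [&& covers b c, covers a c, covers b d & incomp a d].

Definition Ndiag (b c : T) : bool := [exists a, exists d, isN a b c d].

Definition Aset (b c : T) : bool :=
  [&& covers b c, ~~ Ndiag b c &
      [exists a, exists d,
         [&& plt a c, plt b d, incomp a b, incomp c d &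
             Ndiag a c || Ndiag b d]]].

End PosetNotions.

Section Subdivision.
Variables (T : finType) (le : rel T).

(* dummy vertices: one per diagonal edge of an N *)
Definition dummy := {p : T * T | Ndiag le p.1 p.2}.

Definition SN_carrier : finType := (T + dummy)%type.

(* induced order: the dummy vertex u on (b,c) satisfies b < u < c and
   the order is the transitive closure *)
Definition SN_le (x y : SN_carrier) : bool :=
  match x, y with
  | inl x, inl y => le x y
  | inl x, inr v => le x (val v).1
  | inr u, inl y => le (val u).2 y
  | inr u, inr v => (u == v) || le (val u).2 (val v).1
  end.

End Subdivision.

(* Main.v *)
Require Import Defs.
From mathcomp Require Import all_boot.
Set Implicit Arguments. Unset Strict Implicit. Unset Printing Implicit Defensive.

Section Gen.
Variables (T : finType) (le : rel T) (Hp : is_porder le).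

Lemma leR x : le x x. Proof. by case: Hp. Qed.
Lemma leA x y : le x y -> le y x -> x = y.
Proof. by case: Hp => _ A _ h1 h2; apply: A; rewrite h1 h2. Qed.
Lemma leT x y z : le x y -> le y z -> le x z.
Proof. by case: Hp => _ _ Tr h1 h2; apply: (Tr y). Qed.

Lemma plt_le x y : plt le x y -> le x y. Proof. by case/andP. Qed.
Lemma plt_neq x y : plt le x y -> x != y. Proof. by case/andP. Qed.
Lemma plt_irr x : plt le x x = false. Proof. by rewrite /plt eqxx. Qed.
Lemma pltI x y : x != y -> le x y -> plt le x y. Proof. by move=> h1 h2; apply/andP. Qed.

Lemma plt_asym x y : plt le x y -> le y x -> False.
Proof. move=> /andP[ne h1] h2. by move: ne; rewrite (leA h1 h2) eqxx. Qed.

Lemma plt_trans_l x y z : plt le x y -> le y z -> plt le x z.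
Proof.
move=> h1 h2; apply: pltI; last exact: leT (plt_le h1) h2.
apply/eqP=> E; subst z; exact: plt_asym h1 h2.
Qed.
Lemma plt_trans_r x y z : le x y -> plt le y z -> plt le x z.
Proof.
move=> h1 h2; apply: pltI; last exact: leT h1 (plt_le h2).
apply/eqP=> E; subst z; exact: plt_asym h2 h1.
Qed.

Lemma covers_plt x y : covers le x y -> plt le x y. Proof. by case/andP. Qed.
Lemma coversE x y z : covers le x y -> plt le x z -> plt le z y -> False.
Proof. by case/andP=> _ /forallP /(_ z) /negP H h1 h2; apply: H; rewrite h1 h2. Qed.
Lemma coversI x y : plt le x y -> (forall z, plt le x z -> plt le z y -> False) -> covers le x y.
Proof.
move=> h H; apply/andP; split => //; apply/forallP => z; apply/negP => /andP[h1 h2].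
exact: H h1 h2.
Qed.

Lemma NdiagI a b c d : covers le b c -> covers le a c -> covers le b d -> incomp le a d ->
  Ndiag le b c.
Proof. by move=> h1 h2 h3 h4; apply/existsP; exists a; apply/existsP; exists d; apply/and4P. Qed.

Lemma NdiagE b c : Ndiag le b c -> exists a d,
  [/\ covers le b c, covers le a c, covers le b d & incomp le a d].
Proof. by case/existsP=> a /existsP[d /and4P[h1 h2 h3 h4]]; exists a, d. Qed.

Lemma nNdiag a b c d : ~~ Ndiag le b c -> covers le b c -> covers le a c -> covers le b d ->
  le a d || le d a.
Proof.
move=> /negP N h1 h2 h3; case E: (le a d) => //=; case E2: (le d a) => //.
by exfalso; apply: N; apply: (NdiagI h1 h2 h3); rewrite /incomp E E2.
Qed.

Definition nbelow y := #|[pred w | plt le w y]|.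

Lemma nbelow_lt w y : plt le w y -> nbelow w < nbelow y.
Proof.
move=> h; apply: proper_card; apply/properP; split.
  by apply/subsetP => v; rewrite !inE => hv; apply: plt_trans_l hv (plt_le h).
by exists w; rewrite !inE ?plt_irr.
Qed.

Lemma cover_above x z : plt le x z -> exists y, covers le x y /\ le y z.
Proof.
move=> hz.
have P0 : (fun y => plt le x y && le y z) z by rewrite /= hz leR.
case: (@arg_minnP _ z (fun y => plt le x y && le y z) nbelow P0) => y /andP[h1 h2] Hmin.
exists y; split => //; apply: coversI => // w hw1 hw2.
have := Hmin w; rewrite hw1 (leT (plt_le hw2) h2) => /(_ isT).
by rewrite leqNgt (nbelow_lt hw2).
Qed.

Lemma cover_below x z : plt le x z -> exists y, le x y /\ covers le y z.
Proof.
move=> hz.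
have P0 : (fun y => le x y && plt le y z) x by rewrite /= hz leR.
case: (@arg_maxnP _ x (fun y => le x y && plt le y z) nbelow P0) => y /andP[h1 h2] Hmax.
exists y; split => //; apply: coversI => // w hw1 hw2.
have := Hmax w; rewrite hw2 (leT h1 (plt_le hw1)) => /(_ isT).
move=> H; have := nbelow_lt hw1; rewrite ltnNge.
by move=> /negP; apply.
Qed.

Lemma covers_same_bot a c e : covers le a c -> covers le a e -> le c e -> c = e.
Proof.
move=> h1 h2 h3; apply/eqP; apply/negPn/negP => ne.
exact: coversE h2 (covers_plt h1) (pltI ne h3).
Qed.

End Gen.

Section SNsec.
Variables (T : finType) (le : rel T) (Hp : is_porder le).
Local Notation R := (@SN_le T le).

Lemma dplt (u : dummy le) : plt le (sval u).1 (sval u).2.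
Proof. by case/NdiagE: (valP u) => a [d [h _ _ _]]; apply: covers_plt. Qed.
Lemma dle (u : dummy le) : le (sval u).1 (sval u).2.
Proof. exact: plt_le (dplt u). Qed.

Lemma SN_porder : is_porder R.
Proof.
split.
- by case=> [x|u] /=; rewrite ?eqxx ?(leR Hp).
- case=> [x|u]; case=> [y|v] /=.
  + by move=> /andP[h1 h2]; rewrite (leA Hp h1 h2).
  + move=> /andP[h1 h2]; exfalso; apply: (plt_asym Hp (dplt v)).
    exact (leT Hp h2 h1).
  + move=> /andP[h1 h2]; exfalso; apply: (plt_asym Hp (dplt u)).
    exact (leT Hp h1 h2).
  + move=> /andP[/orP[/eqP->//|h1] /orP[/eqP->//|h2]]; exfalso.
    apply: (plt_asym Hp (plt_trans_l Hp (dplt u) (leT Hp h1 (dle v)))) h2.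
- move=> y x z; case: x => [x|u]; case: y => [y|v]; case: z => [z|w] /=.
  + exact: (leT Hp).
  + exact: (leT Hp).
  + by move=> h1 h2; exact: (leT Hp (leT Hp h1 (dle v)) h2).
  + case: (eqVneq v w) => [-> //|_] /= h1 h2.
    exact: (leT Hp (leT Hp h1 (dle v)) h2).
  + exact: (leT Hp).
  + by move=> h1 h2; rewrite (leT Hp h1 h2) orbT.
  + case: (eqVneq u v) => [-> //|_] /= h1 h2.
    exact: (leT Hp (leT Hp h1 (dle v)) h2).
  + case: (eqVneq u v) => [-> //|_] /= h1.
    case: (eqVneq v w) => [<- |_] /= h2; first by rewrite h1 orbT.
    by rewrite (leT Hp (leT Hp h1 (dle v)) h2) orbT.
Qed.

Lemma covR_inr_l u y : covers R (inr u) y -> y = inl (sval u).2.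
Proof.
move=> h; case: y h => [y|v] h.
- case: (eqVneq (sval u).2 y) => [-> //|ne]; exfalso.
  have hl := plt_le (covers_plt h).
  apply: (coversE h (z := inl (sval u).2)); apply: pltI => //=; by rewrite ?(leR Hp).
- exfalso; have /andP[ne h1] := covers_plt h.
  have ne' : u != v by apply: contraNneq ne => ->.
  move: h1; rewrite /= (negbTE ne') /= => h1.
  apply: (coversE h (z := inl (sval u).2)); apply: pltI => //=; by rewrite ?(leR Hp).
Qed.

Lemma covR_inr_r x v : covers R x (inr v) -> x = inl (sval v).1.
Proof.
move=> h; case: x h => [x|u] h.
- case: (eqVneq x (sval v).1) => [-> //|ne]; exfalso.
  have hl := plt_le (covers_plt h).
  apply: (coversE h (z := inl (sval v).1)); apply: pltI => //=; by rewrite ?(leR Hp).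
- exfalso; have /andP[ne h1] := covers_plt h.
  have ne' : u != v by apply: contraNneq ne => ->.
  move: h1; rewrite /= (negbTE ne') /= => h1.
  apply: (coversE h (z := inl (sval v).1)); apply: pltI => //=; by rewrite ?(leR Hp).
Qed.

Lemma covR_inl x y : covers R (inl x) (inl y) -> covers le x y && ~~ Ndiag le x y.
Proof.
move=> h; have /andP[ne hl] := covers_plt h.
apply/andP; split.
- apply: coversI; first by apply: pltI => //; apply: contraNneq ne => ->.
  move=> z h1 h2; apply: (coversE h (z := inl z)); apply: pltI => /=.
  + by apply: contraNneq (plt_neq h1) => [[->]].
  + exact: plt_le h1.
  + by apply: contraNneq (plt_neq h2) => [[->]].
  + exact: plt_le h2.
- apply/negP => N.
  pose v : dummy le := exist _ (x, y) N.
  apply: (coversE h (z := inr v)); apply: pltI => //=; by rewrite ?(leR Hp).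
Qed.

End SNsec.

Definition Hcase (T : finType) (R : rel T) := forall a b c d,
  covers R b c -> ~~ Ndiag R b c -> plt R a c -> plt R b d -> incomp R a b ->
  incomp R c d -> Ndiag R a c -> False.

Section Main.
Variables (T : finType) (le : rel T) (Hp : is_porder le).
Local Notation R := (@SN_le T le).
Let HQ := SN_porder Hp.

Lemma main_case : Hcase R.
Proof.
move=> a b c d hbc nNbc hac hbd iab icd Nac.
case: b hbc nNbc hbd iab => [b0|v] hbc nNbc hbd iab; last first.
  rewrite (covR_inr_l Hp hbc) in icd.
  move: icd => /andP[/negP icd _]; apply: icd.
  case: d hbd => [y|w] /andP[ne h] //=.
  have ne' : v != w by apply: contraNneq ne => ->.
  by move: h; rewrite /= (negbTE ne').
case/NdiagE: Nac => a' [d' [hac' ha'c hacd' ia'd']].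
case: a hac hac' iab hacd' ia'd' => [a0|u] hac hac' iab hacd' ia'd'; last first.
  exfalso; have Ec := covR_inr_l Hp hac'; have Ed := covR_inr_l Hp hacd'.
  rewrite Ed -Ec in ia'd'; move: ia'd' => /andP[/negP H _]; apply: H.
  exact: plt_le (covers_plt ha'c).
case: c hbc nNbc hac hac' ha'c icd => [c0|v] hbc nNbc hac hac' ha'c icd; last first.
  exfalso; have Ea := covR_inr_r Hp hac'; have Ea' := covR_inr_r Hp ha'c.
  rewrite Ea' -Ea in ia'd'; move: ia'd' => /andP[/negP H _]; apply: H.
  exact: plt_le (covers_plt hacd').
move: (covR_inl Hp hac') => /andP[cac nNac].
move: (covR_inl Hp hbc) => /andP[cbc _].
have iab0 : incomp le a0 b0 by [].
have K : forall x y, covers R x (inl c0) -> covers R (inl b0) y -> R x y || R y x.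
  by move=> x y h1 h2; apply: (nNdiag nNbc hbc h1 h2).
have Hbe : forall e, covers le a0 e -> plt le b0 e.
  move=> e hae; have := nNdiag nNac cac cbc hae; case/orP => h.
    apply: pltI => //; apply/eqP => E; subst e.
    by move: iab0 => /andP[/negP H _]; apply: H; exact: plt_le (covers_plt hae).
  by exfalso; move: iab0 => /andP[/negP H _]; apply: H;
     exact: (leT Hp (plt_le (covers_plt hae)) h).
case: d' hacd' ia'd' => [e|w] hacd' ia'd'.
- move: (covR_inl Hp hacd') => /andP[cae _].
  case: a' ha'c ia'd' => [a1|u] ha'c ia'd'.
    move: (covR_inl Hp ha'c) => /andP[ca1c _].
    by move/negP: nNac; apply; apply: (NdiagI cac ca1c cae).
  have Ec := covR_inr_l Hp ha'c; case: Ec => Ec.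
  have hbe : plt R (inl b0) (inl e).
    by have := Hbe e cae; case/andP => ne h; apply: pltI => //=; apply: contraNneq ne => [[->]].
  case: (cover_above HQ hbe) => y [cby hye].
  case/orP: (K _ _ ha'c cby) => h.
    move: ia'd' => /andP[/negP H _]; apply: H.
    exact: (leT HQ h hye).
  apply: (coversE hbc (covers_plt cby)).
  exact: (plt_trans_r HQ h (covers_plt ha'c)).
- have Ea := covR_inr_r Hp hacd'; case: Ea => Ea.
  set e := (sval w).2.
  have cae : covers le a0 e.
    by case/NdiagE: (valP w) => x [z [h _ _ _]]; rewrite Ea.
  have hbe : plt R (inl b0) (inl e).
    by have := Hbe e cae; case/andP => ne h; apply: pltI => //=; apply: contraNneq ne => [[->]].
  case: (cover_above HQ hbe) => y [cby hye].
  case/orP: (K _ _ hac' cby) => h; last first.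
    move: iab0 => /andP[_ /negP H]; apply: H.
    exact: (leT HQ (plt_le (covers_plt cby)) h).
  case: y cby hye h => [y0|v] cby hye h; last first.
    have Eb := covR_inr_r Hp cby; case: Eb => Eb.
    move: iab0 => /andP[/negP H _]; apply: H.
    by move: h; rewrite /= -Eb.
  have Ny : y0 = e.
    case: (eqVneq y0 e) => // ne; exfalso.
    case: (eqVneq a0 y0) => [E|ne2].
      subst y0; move: iab0 => /andP[_ /negP H]; apply: H.
      exact: plt_le (covers_plt cby).
    exact: (coversE cae (pltI ne2 h) (pltI ne hye)).
  subst y0.
  move: (covR_inl Hp cby) => /andP[cbe nNbe].
  have Nae : Ndiag le a0 e by rewrite Ea; exact: (valP w).
  case/NdiagE: Nae => x [z [_ cxe caz ixz]].
  have pac := covers_plt cac.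
  have Hce : plt le c0 e -> False by move=> hce; apply: (coversE cae pac hce).
  case/orP: (nNdiag nNbe cbe cxe cbc) => hx.
    case: (eqVneq x c0) => [E|nxc].
      by subst x; apply: Hce; apply: covers_plt.
    case: (cover_below Hp (pltI nxc hx)) => x' [hxx' cx'c].
    case/orP: (nNdiag nNac cac cx'c caz) => hz.
      by move: ixz => /andP[/negP H _]; apply: H; exact: (leT Hp hxx' hz).
    exact: (coversE cac (covers_plt caz) (plt_trans_r Hp hz (covers_plt cx'c))).
  by apply: Hce; apply: (plt_trans_r Hp hx (covers_plt cxe)).
Qed.

End Main.

Section Dual.
Variables (T : finType) (R : rel T).
Let Rd := fun x y => R y x.

Lemma plt_d x y : plt Rd x y = plt R y x.
Proof. by rewrite /plt eq_sym. Qed.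
Lemma covers_d x y : covers Rd x y = covers R y x.
Proof.
rewrite /covers plt_d; congr (_ && _); apply/forallP/forallP => H z;
  by rewrite ?plt_d andbC; have := H z; rewrite ?plt_d andbC.
Qed.
Lemma incomp_d x y : incomp Rd x y = incomp R y x.
Proof. by rewrite /incomp. Qed.
Lemma Ndiag_d x y : Ndiag Rd x y = Ndiag R y x.
Proof.
apply/idP/idP.
  case/NdiagE => a [d [h1 h2 h3 h4]]; move: h1 h2 h3; rewrite !covers_d => h1 h2 h3.
  by apply: (NdiagI h1 h3 h2); move: h4; rewrite /incomp /Rd.
case/NdiagE => a [d [h1 h2 h3 h4]].
apply: (@NdiagI _ _ d _ _ a); rewrite ?covers_d //.
Qed.

Lemma A_from : Hcase R -> Hcase Rd -> forall x y, ~~ Aset R x y.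
Proof.
move=> H1 H2 b c; apply/negP => /and3P[hbc nN /existsP[a /existsP[d]]].
case/and5P => hac hbd iab icd /orP[N|N].
  exact: H1 a b c d hbc nN hac hbd iab icd N.
apply: (H2 d c b a); rewrite ?covers_d ?Ndiag_d ?plt_d ?incomp_d //.
Qed.
End Dual.

Section Transport.
Variables (T1 T2 : finType) (R1 : rel T1) (R2 : rel T2) (f : T1 -> T2) (g : T2 -> T1).
Hypotheses (fK : cancel f g) (gK : cancel g f) (fR : forall x y, R2 (f x) (f y) = R1 x y).

Lemma plt_t x y : plt R2 (f x) (f y) = plt R1 x y.
Proof. by rewrite /plt fR (inj_eq (can_inj fK)). Qed.
Lemma covers_t x y : covers R2 (f x) (f y) = covers R1 x y.
Proof.
rewrite /covers plt_t; congr (_ && _); apply/forallP/forallP => H z.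
  by have := H (f z); rewrite !plt_t.
by rewrite -(gK z) !plt_t.
Qed.
Lemma incomp_t x y : incomp R2 (f x) (f y) = incomp R1 x y.
Proof. by rewrite /incomp !fR. Qed.
Lemma Ndiag_t x y : Ndiag R2 (f x) (f y) = Ndiag R1 x y.
Proof.
apply/idP/idP.
  case/NdiagE => a [d [h1 h2 h3 h4]].
  move: h2 h3 h4; rewrite -(gK a) -(gK d) !covers_t incomp_t => h2 h3 h4.
  by rewrite covers_t in h1; apply: (NdiagI h1 h2 h3 h4).
case/NdiagE => a [d [h1 h2 h3 h4]].
by apply: (NdiagI (a := f a) (d := f d)); rewrite ?covers_t ?incomp_t.
Qed.

Lemma Hcase_t : Hcase R1 -> Hcase R2.
Proof.
move=> H a b c d; rewrite -(gK a) -(gK b) -(gK c) -(gK d).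
rewrite !covers_t !Ndiag_t !plt_t !incomp_t; exact: H.
Qed.
End Transport.

Section Fin.
Variables (T : finType) (le : rel T).
Definition ldual (r : rel T) : rel T := fun x y => r y x.

Lemma porder_d : is_porder le -> is_porder (ldual le).
Proof.
case=> r a t; split.
- by move=> x; apply: r.
- by move=> x y h; apply: a; rewrite andbC.
- by move=> y x z h1 h2; apply: (t y).
Qed.

Lemma swapN (r : rel T) (p : T * T) : Ndiag (ldual r) p.1 p.2 -> Ndiag r (p.2, p.1).1 (p.2, p.1).2.
Proof. by move=> h; rewrite /= -(Ndiag_d r); exact: h. Qed.

Definition phi (x : SN_carrier (ldual le)) : SN_carrier le :=
  match x with
  | inl x => inl x
  | inr u => inr (exist _ ((sval u).2, (sval u).1) (swapN (valP u)))
  end.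

Lemma swapN' (p : T * T) : Ndiag le p.1 p.2 -> Ndiag (ldual le) (p.2, p.1).1 (p.2, p.1).2.
Proof.
move=> h; rewrite /= (Ndiag_d le); exact: h.
Qed.

Definition psi (x : SN_carrier le) : SN_carrier (ldual le) :=
  match x with
  | inl x => inl x
  | inr u => inr (exist _ ((sval u).2, (sval u).1) (swapN' (valP u)))
  end.

Lemma phiK : cancel phi psi.
Proof.
case=> [x|[[p1 p2] h]] //=; congr inr; apply: val_inj => /=. by [].
Qed.
Lemma psiK : cancel psi phi.
Proof.
case=> [x|[[p1 p2] h]] //=; congr inr; apply: val_inj => /=. by [].
Qed.

Lemma phi_rel x y : (fun a b => @SN_le T le b a) (phi x) (phi y) = @SN_le T (ldual le) x y.
Proof.
case: x => [x|u]; case: y => [y|v] //=.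
congr (_ || _).
have inj := can_inj phiK.
apply/eqP/eqP => [E|->//].
have : phi (inr v) = phi (inr u) by rewrite /= E.
by move/inj => [->].
Qed.

End Fin.

Theorem lemma4 (T : finType) (le : rel T) :
  is_porder le ->
  forall x y : SN_carrier le, ~~ Aset (@SN_le T le) x y.
Proof.
move=> Hp; apply: A_from; first exact: main_case.
apply: (Hcase_t (@phiK T le) (@psiK T le) (@phi_rel T le)).
exact: main_case (porder_d Hp).
Qed.
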